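(* Let $k\ge0$, let $G$ be a graph, let $u,v$ be distinct vertices of $G$, and let $R\neq\emptyset$ be a subset of $V(G)\setminus\{u,v\}$ such that, with $L=V(G)\setminus(\{u,v\}\cup R)$, the set $C$ of edges between $R$ and $L$ has at most $k$ elements. Let $\tau$ be a linear order of $C$, listing $C$ as $c_1,\dots,c_\ell$, and let $\chi\colon C\to\{0,\dots,k\}$. Let $G_{\tau,(u,v),R}$ be the graph obtained from $G[\{u,v\}\cup R]$ by adding new vertices $t_1,\dots,t_\ell$ and, for each $i\in[\ell]$, an edge between $t_i$ and the endpoint of $c_i$ in $R$ (this edge is again denoted $c_i$). If $G_{\tau,(u,v),R}$ admits an outer $k$-planar drawing $D$ such that (P1) the cyclic order of $D$ contains $(u,t_1,\dots,t_\ell,v)$ as a consecutive subsequence, and (P2) $\chi(c_i)$ equals the number of edges crossing $c_i$ in $D$ for every $i\in[\ell]$, then there is a vertex $w\in R$ such that each of the vertex pairs $\{u,w\}$ and $\{v,w\}$ is pierced by at most $k$ edges in $D$.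
   Context: A circular drawing of a graph is a cyclic order $(v_1,\dots,v_n)$ of its vertices. An edge $\{v_i,v_j\}$ ($i<j$) pierces a pair of (not necessarily adjacent) vertices $\{v_{i'},v_{j'}\}$ ($i'<j'$) if $i<i'<j<j'$ or $i'<i<j'<j$; if $\{v_{i'},v_{j'}\}$ is an edge, the two edges are said to cross. A circular drawing is outer $k$-planar if every edge crosses at most $k$ edges. *)

(* Defs.v *)
From mathcomp Require Import all_boot.
Set Implicit Arguments. Unset Strict Implicit. Unset Printing Implicit Defensive.

(* A circular drawing is a duplicate-free sequence D listing the vertices
   in cyclic order (any rotation represents the same cyclic order). *)
Section Drawing.
Variable W : finType.
Variable E : rel W.
Variable D : seq W.

Definition pos (x : W) : nat := index x D.

Definition pierces (a b x y : W) : bool :=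
  let i := minn (pos a) (pos b) in let j := maxn (pos a) (pos b) in
  let i' := minn (pos x) (pos y) in let j' := maxn (pos x) (pos y) in
  [&& i < i', i' < j & j < j'] || [&& i' < i, i < j' & j' < j].

Definition piercing_edges (x y : W) : {set {set W}} :=
  [set f : {set W} | [exists a, exists b,
     [&& f == [set a; b], E a b & pierces a b x y]]].

Definition npierce (x y : W) : nat := #|piercing_edges x y|.

Definition ncross (a b : W) : nat :=
  #|[set f : {set W} | [exists x, exists y,
     [&& f == [set x; y], E x y & pierces a b x y]]]|.

Definition circular_drawing (VS : {set W}) : Prop :=
  uniq D /\ forall x, (x \in D) = (x \in VS).

Definition outer_kplanar (k : nat) : Prop :=
  forall a b, E a b -> ncross a b <= k.
End Drawing.

(* The graph G_{tau,(u,v),R}; cs lists C = edges between R and L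
   as pairs (r, l) with r in R, l in L, in the order tau;
   vertex inr i is t_{i+1}. *)
Section Gtau.
Variable V : finType.
Variable e : rel V.
Variables (u v : V) (R : {set V}) (cs : seq (V * V)).

Definition URset : {set V} := u |: (v |: R).

Definition Gtau_vertices : {set V + 'I_(size cs)} :=
  [set a | match a with inl x => x \in URset | inr _ => true end].

Definition Gtau_edge : rel (V + 'I_(size cs)) := fun a b =>
  match a, b with
  | inl x, inl y => [&& e x y, x \in URset & y \in URset]
  | inl x, inr i => x == (nth (u, u) cs i).1
  | inr i, inl x => x == (nth (u, u) cs i).1
  | inr _, inr _ => false
  end.

Definition tseq : seq (V + 'I_(size cs)) := [seq inr i | i <- enum 'I_(size cs)].
End Gtau.
Arguments Gtau_edge [V] e u v R cs _ _.

(* Main.v *)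
Require Import Defs.
From mathcomp Require Import all_boot zify.
Set Implicit Arguments. Unset Strict Implicit. Unset Printing Implicit Defensive.

(* Rotate the drawing so that it starts with u, t_1..t_l, v; positions then are
   u = 0, t_i = i, v = l+1 and the vertices of R occupy l+2..N-1.  Piercing is
   rotation invariant (PPx_rot).  Let f(w), g(w) be the numbers of edges piercing
   {u,w} and {v,w}.  Let x0 be the leftmost w with f(w) <= k and y0 the rightmost
   w with g(w) <= k.
   - If x0 <= y0, a vertex w in [x0,y0] minimising |F_w u G_w| is good
     (G_w \ F_w grows and F_w \ G_w shrinks with w).
   - If y0 < x0 we reach a contradiction: some R-R edge jumps over y0; the one
     with farthest right end (then leftmost left end) is crossed by every edge
     piercing {u,a1} or {v,b1} except at most the l <= k edges at t_i, so it has
     at least 2k+2-k > k crossings. *)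

Definition PP (i j i' j' : nat) : bool :=
  let a := minn i j in let b := maxn i j in
  let a' := minn i' j' in let b' := maxn i' j' in
  [&& a < a', a' < b & b < b'] || [&& a' < a, a < b' & b' < b].
Definition btw (i j x : nat) := (i < x < j) || (j < x < i).
Definition PPx i j i' j' :=
  [&& i' != i, i' != j, j' != i, j' != j & btw i j i' (+) btw i j j'].
Lemma PP_sym1 i j i' j' : PP i j i' j' = PP j i i' j'.
Proof. by rewrite /PP minnC maxnC. Qed.
Lemma PP_sym2 i j i' j' : PP i j i' j' = PP i j j' i'.
Proof. by rewrite /PP [minn j' _]minnC [maxn j' _]maxnC. Qed.
Lemma PP_swap i j i' j' : PP i j i' j' = PP i' j' i j.
Proof. by rewrite /PP orbC. Qed.
Lemma PPx_sym1 i j i' j' : PPx i j i' j' = PPx j i i' j'.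
Proof. rewrite /PPx /btw. by rewrite (orbC (i < i' < j)) (orbC (i < j' < j)); case: (i' != i); case: (i' != j); case: (j' != i); case: (j' != j). Qed.
Lemma PPx_sym2 i j i' j' : PPx i j i' j' = PPx i j j' i'.
Proof. rewrite /PPx addbC. by case: (i' != i); case: (i' != j); case: (j' != i); case: (j' != j). Qed.
Lemma PPE i j i' j' : PP i j i' j' = PPx i j i' j'.
Proof.
wlog h1 : i j / i <= j.
  move=> H; case: (leqP i j) => h; first exact: H.
  rewrite PP_sym1 PPx_sym1; apply: H; lia.
wlog h2 : i' j' / i' <= j'.
  move=> H; case: (leqP i' j') => h; first exact: H.
  rewrite PP_sym2 PPx_sym2; apply: H; lia.
rewrite /PP /PPx /btw.
rewrite (minn_idPl h1) (maxn_idPr h1) (minn_idPl h2) (maxn_idPr h2).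
apply/idP/idP => H; lia.
Qed.
Lemma PPx_swap i j i' j' : PPx i j i' j' = PPx i' j' i j.
Proof. by rewrite -!PPE PP_swap. Qed.

Definition rp (N n x : nat) := if n <= x then x - n else x + (N - n).
Lemma btw_rot N n i j x : n <= N -> i < N -> j < N -> x < N -> x != i -> x != j ->
  btw (rp N n i) (rp N n j) (rp N n x) = btw i j x (+) ((n <= i) (+) (n <= j)).
Proof.
move=> hn hi hj hx xi xj; rewrite /btw /rp.
case: (leqP n i) => h1; case: (leqP n j) => h2; case: (leqP n x) => h3 /=;
apply/idP/idP => H; lia.
Qed.
Lemma rp_inj N n x y : n <= N -> x < N -> y < N -> (rp N n x == rp N n y) = (x == y).
Proof. move=> *; rewrite /rp; case: (leqP n x); case: (leqP n y) => *; apply/eqP/eqP; lia. Qed.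
Lemma PPx_rot N n i j i' j' : n <= N -> i < N -> j < N -> i' < N -> j' < N ->
  PPx (rp N n i) (rp N n j) (rp N n i') (rp N n j') = PPx i j i' j'.
Proof.
move=> hn hi hj hi' hj'; rewrite /PPx !rp_inj //.
case: (eqVneq i' i) => //= h1; case: (eqVneq i' j) => //= h2;
case: (eqVneq j' i) => //= h3; case: (eqVneq j' j) => //= h4.
rewrite !btw_rot //.
by case: (btw i j i'); case: (btw i j j'); case: (n <= i); case: (n <= j).
Qed.
Lemma index_rot (T : eqType) (s : seq T) n x : uniq s -> x \in s -> n <= size s ->
  index x (rot n s) = rp (size s) n (index x s).
Proof.
move=> us xs hn.
have hi : index x s < size s by rewrite index_mem.
have ur : uniq (rot n s) by rewrite rot_uniq.
set i := index x s.
have -> : x = nth x s i by rewrite nth_index.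
rewrite /rp; case: (leqP n i) => h.
- have e : nth x s i = nth x (rot n s) (i - n).
    rewrite /rot nth_cat size_drop ifT; last lia.
    by rewrite nth_drop; congr nth; lia.
  rewrite e index_uniq // size_rot; lia.
- have e : nth x s i = nth x (rot n s) (i + (size s - n)).
    rewrite /rot nth_cat size_drop ifF; last lia.
    rewrite nth_take; last lia. congr nth; lia.
  rewrite e index_uniq // size_rot; lia.
Qed.

Lemma pierces_rot (W : finType) (D : seq W) r a b x y :
  uniq D -> a \in D -> b \in D -> x \in D -> y \in D ->
  pierces D a b x y =
  PPx (index a (rot r D)) (index b (rot r D)) (index x (rot r D)) (index y (rot r D)).
Proof.
move=> uD aD bD xD yD.
have -> : pierces D a b x y = PP (index a D) (index b D) (index x D) (index y D) by [].
rewrite PPE rot_minn.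
have hm : minn r (size D) <= size D by apply: geq_minr.
rewrite !index_rot // PPx_rot // index_mem //.
Qed.


Lemma PPxP i j a b : PPx i j a b = [&& a != i, a != j, b != i, b != j &
  ((i < a < j) || (j < a < i)) (+) ((i < b < j) || (j < b < i))].
Proof. by []. Qed.

Lemma NQ1 L z z' a b : 0 < L -> L < z -> z <= z' ->
  PPx L z a b -> ~~ PPx 0 z a b -> PPx L z' a b && ~~ PPx 0 z' a b.
Proof. rewrite !PPxP => *; lia. Qed.

Lemma NQ2 L z z' a b : 0 < L -> L < z -> z <= z' ->
  PPx 0 z' a b -> ~~ PPx L z' a b -> PPx 0 z a b && ~~ PPx L z a b.
Proof. rewrite !PPxP => *; lia. Qed.

Lemma NB0 N a b : a < N -> b < N -> ~~ PPx 0 N.-1 a b.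
Proof. rewrite !PPxP => *; lia. Qed.

Lemma NB1 L a b : ~~ PPx L L.+1 a b.
Proof. rewrite !PPxP => *; lia. Qed.

Lemma NSA L y a b : 0 < L -> L < y -> PPx 0 y a b ->
  (a == 0) || (L <= a) -> (b == 0) || (L <= b) ->
  (a = L -> L < b -> b <= y) -> (b = L -> L < a -> a <= y) ->
  ~~ [&& L < a, a < y & y < b] -> ~~ [&& L < b, b < y & y < a] -> False.
Proof. rewrite !PPxP => *; lia. Qed.


Lemma PPx0_split j a b : 0 < j -> PPx 0 j a b -> a < b -> 0 < a < j /\ j < b.
Proof. rewrite PPxP => *; lia. Qed.

Lemma PPxL_split L q a b : L < q -> PPx L q a b -> a < b ->
  (L < a < q /\ q < b) \/ (a < L /\ L < b < q).
Proof. rewrite PPxP => *; lia. Qed.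

Lemma PPx_in_out i j a b : i < j -> i < b < j -> (a < i \/ j < a) -> PPx i j a b.
Proof. rewrite PPxP => *; lia. Qed.

Ltac inout := first [apply: PPx_in_out; lia | rewrite PPx_sym2; apply: PPx_in_out; lia].

Lemma PPx_neq i j a b : PPx i j a b -> a != b.
Proof. rewrite PPxP => *; lia. Qed.

Section N2.
Variables (L x0 y0 p1 q1 : nat).
Hypotheses (hL : 0 < L) (h1 : L < p1) (h2 : p1 < y0) (h3 : y0 < x0) (h4 : y0 < q1).
Definition FU a b := a = 0 -> L < b -> x0 <= b.
Definition FV a b := a = L -> L < b -> b <= y0.
Definition FC a b := L < a -> a < y0 -> y0 < b -> b <= q1 /\ (b = q1 -> p1 <= a).
Definition NT a := (a == 0) || (L <= a).

Lemma NiF a b : PPx 0 p1 a b -> NT a -> NT b -> FU a b -> FU b a -> FV a b -> FV b a ->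
  FC a b -> FC b a -> PPx p1 q1 a b.
Proof.
wlog ab : a b / a < b.
  move=> H hp na nb u1 u2 v1 v2 c1 c2.
  case: (ltngtP a b) => [ab|ba|ab]; first exact: H.
    by rewrite PPx_sym2; apply: H => //; rewrite PPx_sym2.
  by move: (PPx_neq hp); rewrite ab eqxx.
move=> hp na _ _ _ v1 _ c1 _.
have [ha hb] := PPx0_split (ltn_trans hL h1) hp ab.
move: na; rewrite /NT => /orP [/eqP a0|La]; first by move: ha; rewrite a0.
case: (ltngtP L a) => [La'|aL'|aL]; last first.
- have := v1 (esym aL) (ltn_trans h1 hb) => hby.
  inout.
- lia.
- have [/andP [_ ay] _] : (0 < a < y0) /\ True by split => //; lia.
  case: (leqP b y0) => hby.
  + inout.
  + have [hq hq'] := c1 La' ay hby.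
    apply: PPx_in_out; [lia| |lia].
    have : b != q1 by apply/eqP => bq; have := hq' bq; lia.
    lia.
Qed.

Lemma NiG a b : PPx L q1 a b -> NT a -> NT b -> FU a b -> FU b a -> FV a b -> FV b a ->
  FC a b -> FC b a -> PPx p1 q1 a b.
Proof.
wlog ab : a b / a < b.
  move=> H hp na nb u1 u2 v1 v2 c1 c2.
  case: (ltngtP a b) => [ab|ba|ab]; first exact: H.
    by rewrite PPx_sym2; apply: H => //; rewrite PPx_sym2.
  by move: (PPx_neq hp); rewrite ab eqxx.
move=> hp na _ u1 _ _ _ c1 _.
have Lq : L < q1 by lia.
case: (PPxL_split Lq hp ab) => [[/andP [La aq] qb]|[aL /andP [Lb bq]]].
- case: (ltngtP p1 a) => [pa|ap|pa].
  + inout.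
  + have [hq _] := c1 La (ltn_trans ap h2) (ltn_trans h4 qb); lia.
  + have ay : a < y0 by lia.
    have [hq _] := c1 La ay (ltn_trans h4 qb); lia.
- move: na; rewrite /NT => /orP [/eqP a0|]; last lia.
  have := u1 a0 Lb => hb.
  inout.
Qed.

Lemma Nii a b : PPx 0 p1 a b -> PPx L q1 a b -> FU a b -> FU b a -> FV a b -> FV b a ->
  FC a b -> FC b a -> PPx p1 q1 a b && ~~ (NT a && NT b).
Proof.
wlog ab : a b / a < b.
  move=> H hp hq u1 u2 v1 v2 c1 c2.
  case: (ltngtP a b) => [ab|ba|ab]; first exact: H.
    by rewrite PPx_sym2 [NT a && _]andbC; apply: H => //; rewrite PPx_sym2.
  by move: (PPx_neq hp); rewrite ab eqxx.
move=> hp hq _ _ _ _ c1 _.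
have [ha hb] := PPx0_split (ltn_trans hL h1) hp ab.
have Lq : L < q1 by lia.
case: (PPxL_split Lq hq ab) => [[/andP [La aq] qb]|[aL /andP [Lb bq]]].
- have ay : a < y0 by lia.
  have [hq' _] := c1 La ay (ltn_trans h4 qb); lia.
- apply/andP; split; first by inout.
  rewrite /NT; lia.
Qed.
End N2.


Section Main.
Variables (V : finType) (e : rel V) (k : nat) (u v : V) (R : {set V}) (cs : seq (V * V)).
Variable D : seq (V + 'I_(size cs)).
Hypotheses (esym : symmetric e) (eirr : irreflexive e) (huv : u != v)
  (HuR : u \notin R) (HvR : v \notin R) (R0 : R != set0).
Hypothesis Hcs : forall r l, ((r, l) \in cs) = [&& r \in R, l \in ~: URset u v R & e r l].
Hypothesis Hk : size cs <= k.
Hypothesis Hdraw : circular_drawing D (Gtau_vertices u v R cs).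
Hypothesis Hpl : outer_kplanar (Gtau_edge e u v R cs) D k.
Variable r0 : nat.
Hypothesis Hpre : prefix (inl u :: rcons (tseq cs) (inl v)) (rot r0 D).

Local Notation W := (V + 'I_(size cs))%type.
Local Notation E := (Gtau_edge e u v R cs).
Local Notation l := (size cs).
Local Notation D' := (rot r0 D).
Local Notation p z := (index z (rot r0 D)).
Local Notation N := (size D).
Local Notation P := (inl u :: rcons (tseq cs) (inl v) : seq W).

Lemma uD : uniq D. Proof. by case: Hdraw. Qed.
Lemma memD z : (z \in D) = (z \in Gtau_vertices u v R cs). Proof. by case: Hdraw. Qed.
Lemma uD' : uniq D'. Proof. by rewrite rot_uniq uD. Qed.
Lemma memD' z : (z \in D') = (z \in D). Proof. by rewrite mem_rot. Qed.

Lemma D'E : D' = P ++ drop (size P) D'.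
Proof. by move/prefixP: Hpre => [s ->]; rewrite drop_size_cat. Qed.

Lemma size_tseq : size (tseq cs) = l.
Proof. by rewrite /tseq size_map size_enum_ord. Qed.

Lemma inl_notin_tseq x : (inl x \in tseq cs) = false.
Proof. by apply/negbTE/mapP => [[i _]]. Qed.

Lemma inr_in_tseq i : inr i \in tseq cs.
Proof. by apply/mapP; exists i; rewrite ?mem_enum. Qed.

Lemma p_cat z : z \in P -> p z = index z P.
Proof. by move=> zP; rewrite D'E index_cat zP. Qed.

Lemma p_notP z : z \notin P -> size P <= p z.
Proof. move=> zP; rewrite D'E index_cat (negbTE zP); apply: leq_addr. Qed.

Lemma p_u : p (inl u) = 0.
Proof. by rewrite p_cat ?mem_head //= eqxx. Qed.

Lemma p_v : p (inl v) = l.+1.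
Proof.
rewrite p_cat; last by rewrite inE mem_rcons mem_head orbT.
rewrite /= (_ : (inl u == inl v :> W) = false); last by apply/eqP => -[/eqP]; rewrite (negbTE huv).
rewrite -cats1 index_cat inl_notin_tseq /= eqxx size_tseq; lia.
Qed.

Lemma p_T i : 0 < p (inr i) <= l.
Proof.
rewrite p_cat; last by rewrite inE mem_rcons inE inr_in_tseq !orbT.
rewrite /= -cats1 index_cat inr_in_tseq /=.
by rewrite -[X in _ < X]size_tseq index_mem inr_in_tseq.
Qed.

Lemma p_lt z : z \in D -> p z < N.
Proof. by move=> zD; rewrite -(size_rot r0 D) index_mem memD'. Qed.

Lemma p_inj z z' : z \in D -> p z = p z' -> z = z'.
Proof. by move=> zD h; rewrite -(nth_index z (_ : z \in D')) ?memD' // h nth_index // -index_mem -h index_mem memD'. Qed.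

Lemma size_P : size P = l.+2.
Proof. by rewrite /= size_rcons size_tseq. Qed.

Lemma inlR_notP s : s \in R -> inl s \notin P.
Proof.
move=> sR; rewrite inE mem_rcons inE inl_notin_tseq orbF.
apply/norP; split; apply/eqP => -[es]; move: sR; rewrite es ?(negbTE HuR) ?(negbTE HvR) //.
Qed.

Lemma inlR_D s : s \in R -> inl s \in D.
Proof. by move=> sR; rewrite memD inE /URset !inE sR !orbT. Qed.

Lemma p_R s : s \in R -> l.+1 < p (inl s).
Proof. move=> sR; have := p_notP (inlR_notP sR); rewrite size_P; lia. Qed.

Definition isR (z : W) := (z \in D) && (l.+1 < p z).

Lemma isR_inl z : isR z -> exists2 s, s \in R & z = inl s.
Proof.
case/andP=> zD hz; move: zD; rewrite memD inE.
case: z hz => [x|i] hz /=.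
- rewrite /URset !inE => /or3P [/eqP ex|/eqP ex|xR].
  + by move: hz; rewrite ex p_u.
  + by move: hz; rewrite ex p_v; lia.
  + by exists x.
- case/andP: (p_T i) => _ h; move: hz; rewrite ltnNge.
  by rewrite (leq_trans h (leqnSn _)).
Qed.

Lemma cls z : z \in D ->
  [\/ z = inl u, (exists i, z = inr i), z = inl v | isR z].
Proof.
move=> zD; have := zD; rewrite memD inE; case: z zD => [x|i] zD /=.
- rewrite /URset !inE => /or3P [/eqP ->|/eqP ->|xR].
  + by apply: Or41.
  + by apply: Or43.
  + by apply: Or44; rewrite /isR zD p_R.
- by move=> _; apply: Or42; exists i.
Qed.

Lemma R_big : l.+3 <= N.
Proof.
case/set0Pn: R0 => s sR.
have := p_R sR; have := p_lt (inlR_D sR); lia.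
Qed.

Lemma nth_cs_R (i : 'I_l) : (nth (u, u) cs i).1 \in R.
Proof.
have : nth (u, u) cs i \in cs by rewrite mem_nth.
by case: (nth (u, u) cs i) => [a b]; rewrite Hcs => /and3P [].
Qed.

Lemma E_in a b : E a b -> (a \in D) && (b \in D).
Proof.
rewrite !memD !inE; case: a => [x|i]; case: b => [y|j] //=.
- by case/and3P => _ -> ->.
- by move/eqP => ->; rewrite /URset !inE nth_cs_R !orbT.
- by move/eqP => ->; rewrite /URset !inE nth_cs_R !orbT.
Qed.

Lemma E_sym a b : E a b = E b a.
Proof.
case: a => [x|i]; case: b => [y|j] //=.
by apply/idP/idP => /and3P [h1 h2 h3]; apply/and3P; split => //; rewrite esym.
Qed.

Lemma E_irr a : E a a = false.
Proof. by case: a => [x|i] //=; rewrite eirr. Qed.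

Definition Tedge (i : 'I_l) : {set W} := [set inr i; inl (nth (u, u) cs i).1].
Definition Tset : {set {set W}} := [set Tedge i | i : 'I_l].

Lemma card_Tset : #|Tset| <= k.
Proof. by apply: leq_trans (leq_imset_card _ _) _; rewrite card_ord. Qed.

Lemma E_Tl i b : E (inr i) b -> [set inr i; b] \in Tset.
Proof. by case: b => [y|j] //= /eqP ->; apply/imsetP; exists i. Qed.

Lemma E_Tr a i : E a (inr i) -> [set a; inr i] \in Tset.
Proof. by rewrite E_sym setUC => /E_Tl. Qed.

Lemma set2_eq (a b c d : W) : [set a; b] = [set c; d] -> (a = c /\ b = d) \/ (a = d /\ b = c).
Proof.
move=> h.
have ha : a \in [set c; d] by rewrite -h !inE eqxx.
have hb : b \in [set c; d] by rewrite -h !inE eqxx orbT.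
have hc : c \in [set a; b] by rewrite h !inE eqxx.
have hd : d \in [set a; b] by rewrite h !inE eqxx orbT.
move: ha hb hc hd; rewrite !inE => ha hb hc hd.
case: (eqVneq a c) => [ac|nac].
- left; split => //; case/orP: hb => /eqP bc //.
  by move: hd; rewrite bc -ac orbb => /eqP ->.
- have ad : a = d by case/orP: ha => /eqP // ac; rewrite ac eqxx in nac.
  right; split => //; case/orP: hc => /eqP // ca; by rewrite ca eqxx in nac.
Qed.

Definition PS (X Y : W) : {set {set W}} :=
  [set f : {set W} | [exists a : W, exists b : W,
     [&& f == [set a; b], E a b & PPx (p X) (p Y) (p a) (p b)]]].

Lemma PSP X Y f : f \in PS X Y ->
  exists a, exists b, [/\ f = [set a; b], E a b & PPx (p X) (p Y) (p a) (p b)].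
Proof.
by rewrite inE => /existsP [a /existsP [b /and3P [/eqP fe Eab h]]]; exists a, b.
Qed.

Lemma memPS X Y a b : E a b -> ([set a; b] \in PS X Y) = PPx (p X) (p Y) (p a) (p b).
Proof.
move=> Eab; apply/idP/idP => [/PSP [a' [b' [fe _ h]]]|h].
- by case: (set2_eq fe) => [][-> ->] //; rewrite PPx_sym2.
- by rewrite inE; apply/existsP; exists a; apply/existsP; exists b; rewrite eqxx Eab h.
Qed.

Lemma piercing_PS X Y : X \in D -> Y \in D -> piercing_edges E D X Y = PS X Y.
Proof.
move=> XD YD; apply/setP => f; rewrite !inE.
apply/existsP/existsP => -[a /existsP [b /and3P [fe Eab h]]]; exists a; apply/existsP; exists b;
  rewrite fe Eab /=; case/andP: (E_in Eab) => aD bD.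
- by rewrite (pierces_rot r0 uD aD bD XD YD) PPx_swap in h.
- by rewrite (pierces_rot r0 uD aD bD XD YD) PPx_swap.
Qed.

Lemma ncross_PS a b : E a b -> ncross E D a b = #|PS a b|.
Proof.
move=> Eab; case/andP: (E_in Eab) => aD bD; rewrite /ncross.
apply: eq_card => f; rewrite !inE.
apply/existsP/existsP => -[x /existsP [y /and3P [fe Exy h]]]; exists x; apply/existsP; exists y;
  rewrite fe Exy /=; case/andP: (E_in Exy) => xD yD.
- by rewrite (pierces_rot r0 uD aD bD xD yD) in h.
- by rewrite (pierces_rot r0 uD aD bD xD yD).
Qed.

Lemma PS_le a b : E a b -> #|PS a b| <= k.
Proof. by move=> Eab; rewrite -ncross_PS //; apply: Hpl. Qed.

Lemma p_neq a b : E a b -> p a != p b.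
Proof.
move=> Eab; case/andP: (E_in Eab) => aD bD; apply/eqP => h.
by move: Eab; rewrite (p_inj aD h) E_irr.
Qed.

Lemma inlu_D : (inl u : W) \in D.
Proof. by rewrite memD inE /URset !inE eqxx. Qed.
Lemma inlv_D : (inl v : W) \in D.
Proof. by rewrite memD inE /URset !inE eqxx orbT. Qed.

Definition Fs (w : W) := PS (inl u) w.
Definition Gs (w : W) := PS (inl v) w.

Lemma Fs_mem w a b : E a b -> ([set a; b] \in Fs w) = PPx 0 (p w) (p a) (p b).
Proof. by move=> Eab; rewrite /Fs memPS // p_u. Qed.
Lemma Gs_mem w a b : E a b -> ([set a; b] \in Gs w) = PPx l.+1 (p w) (p a) (p b).
Proof. by move=> Eab; rewrite /Gs memPS // p_v. Qed.

Lemma card_UD (T : finType) (A B : {set T}) : #|A :|: B| = #|A| + #|B :\: A|.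
Proof.
rewrite -(cardsID A (A :|: B)) setUK; congr (_ + _); congr #|_|.
by rewrite setDUl setDv set0U.
Qed.

Lemma Q1 z z' : isR z -> isR z' -> p z <= p z' -> Gs z :\: Fs z \subset Gs z' :\: Fs z'.
Proof.
move=> /andP [_ hz] _ hzz; apply/subsetP => f; rewrite !in_setD => /andP [nF G].
have [a [b [fe Eab h]]] := PSP G; rewrite fe in nF *.
rewrite (Fs_mem z Eab) in nF; rewrite (Fs_mem z' Eab) (Gs_mem z' Eab); rewrite p_v in h.
by rewrite andbC; apply: (NQ1 _ hz hzz h nF).
Qed.

Lemma Q2 z z' : isR z -> isR z' -> p z <= p z' -> Fs z' :\: Gs z' \subset Fs z :\: Gs z.
Proof.
move=> /andP [_ hz] _ hzz; apply/subsetP => f; rewrite !in_setD => /andP [nG F].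
have [a [b [fe Eab h]]] := PSP F; rewrite fe in nG *.
rewrite (Gs_mem z' Eab) in nG; rewrite (Fs_mem z Eab) (Gs_mem z Eab); rewrite p_u in h.
by rewrite andbC; apply: (NQ2 _ hz hzz h nG).
Qed.

Definition NTl (x : nat) := (x == 0) || (l.+1 <= x).

Lemma edge_cases a b : E a b -> ([set a; b] \in Tset) \/ (NTl (p a) /\ NTl (p b)).
Proof.
move=> Eab; case/andP: (E_in Eab) => aD bD.
have hc z : z \in D -> (exists i, z = inr i) \/ NTl (p z).
  move=> zD; case: (cls zD) => [->|h|->|/andP [_ h]].
  - by right; rewrite /NTl p_u.
  - by left.
  - by right; rewrite /NTl p_v leqnn orbT.
  - by right; rewrite /NTl (ltnW h) orbT.
case: (hc _ aD) => [[i ai]|na]; first by left; rewrite ai; apply: E_Tl; rewrite -ai.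
case: (hc _ bD) => [[i bi]|nb]; first by left; rewrite bi; apply: E_Tr; rewrite -bi.
by right.
Qed.

Lemma npierce_F w : w \in D -> npierce E D (inl u) w = #|Fs w|.
Proof. by move=> wD; rewrite /npierce piercing_PS // inlu_D. Qed.
Lemma npierce_G w : w \in D -> npierce E D (inl v) w = #|Gs w|.
Proof. by move=> wD; rewrite /npierce piercing_PS // inlv_D. Qed.

Lemma Fs_edge z : E (inl u) z -> #|Fs z| <= k.
Proof. exact: PS_le. Qed.
Lemma Gs_edge z : E (inl v) z -> #|Gs z| <= k.
Proof. exact: PS_le. Qed.

Lemma p_nth j : j < N -> p (nth (inl u) D' j) = j.
Proof. by move=> hj; rewrite index_uniq ?uD' // size_rot. Qed.
Lemma nth_D j : j < N -> nth (inl u) D' j \in D.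
Proof. by move=> hj; rewrite -memD' mem_nth // size_rot. Qed.

Lemma NA (a d X a0 d0 X0 : nat) : X = a + d -> X0 = a0 + d0 -> X <= X0 -> d0 <= d -> a0 <= k -> a <= k.
Proof. clear; lia. Qed.

Lemma NBc (F G U I XU XI X T : nat) : U + I = F + G -> XU + XI = X + T ->
  U <= XU -> I <= XI -> X <= k -> T <= k -> k < F -> k < G -> False.
Proof. clear; lia. Qed.

Definition SSy (y0 : W) (ab : W * W) :=
  [&& E ab.1 ab.2, l.+1 < p ab.1, p ab.1 < p y0 & p y0 < p ab.2].

Lemma case2 (x0 y0 : W) : isR x0 -> isR y0 -> p y0 < p x0 ->
  (forall z, isR z -> #|Fs z| <= k -> p x0 <= p z) ->
  (forall z, isR z -> #|Gs z| <= k -> p z <= p y0) -> False.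
Proof.
move=> Rx0 Ry0 hyx hA hB.
have ly0 : l.+1 < p y0 by case/andP: Ry0.
have isR_of z : z \in D -> l.+1 < p z -> isR z by move=> zD hz; rewrite /isR zD hz.
have FUe a b : E a b -> FU l.+1 (p x0) (p a) (p b).
  move=> Eab pa hb; case/andP: (E_in Eab) => aD bD.
  have au : a = inl u by apply: (p_inj aD); rewrite p_u.
  apply: hA; first exact: isR_of.
  by apply: Fs_edge; rewrite -au.
have FVe a b : E a b -> FV l.+1 (p y0) (p a) (p b).
  move=> Eab pa hb; case/andP: (E_in Eab) => aD bD.
  have av : a = inl v by apply: (p_inj aD); rewrite p_v.
  apply: hB; first exact: isR_of.
  by apply: Gs_edge; rewrite -av.
have Abad z : isR z -> p z < p x0 -> k < #|Fs z|.
  by move=> Rz hz; rewrite ltnNge; apply/negP => /(hA z Rz); rewrite leqNgt hz.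
have Bbad z : isR z -> p y0 < p z -> k < #|Gs z|.
  by move=> Rz hz; rewrite ltnNge; apply/negP => /(hB z Rz); rewrite leqNgt hz.
have hL : 0 < l.+1 by [].
have [ab0 Sab0] : exists ab : W * W, SSy y0 ab.
  case: (boolP [exists ab : W * W, SSy y0 ab]) => [/existsP //|/existsPn nS].
  exfalso.
  have sT : Fs y0 \subset Tset.
    apply/subsetP => f /PSP [a [b [-> Eab h]]]; rewrite p_u in h.
    case: (edge_cases Eab) => [//|[na nb]]; exfalso.
    have Eba : E b a by rewrite E_sym.
    apply: (NSA hL ly0 h na nb (FVe _ _ Eab) (FVe _ _ Eba)).
    - by move: (nS (a, b)); rewrite /SSy /= Eab.
    - by move: (nS (b, a)); rewrite /SSy /= Eba.
  have := hA y0 Ry0 (leq_trans (subset_leq_card sT) card_Tset).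
  by rewrite leqNgt hyx.
case: (arg_maxnP (fun ab : W * W => p ab.2) Sab0) => ab1 S1 max1.
pose SSq := [pred ab : W * W | SSy y0 ab && (p ab.2 == p ab1.2)].
have Sq1 : SSq ab1 by rewrite /SSq /= S1 eqxx.
case: (arg_minnP (fun ab : W * W => p ab.1) Sq1) => ab2 /andP [S2 /eqP e2] min2.
move: S2 e2 min2; case: ab2 => a1 b1 /= S2 e2 min2.
case/and4P: (S2) => E12 h1 h2 h3.
have FCe c d : E c d -> FC l.+1 (p y0) (p a1) (p b1) (p c) (p d).
  move=> Ecd hc1 hc2 hd.
  have Scd : SSy y0 (c, d) by rewrite /SSy /= Ecd hc1 hc2 hd.
  split; first by rewrite e2; exact: (max1 _ Scd).
  move=> eq; apply: (min2 (c, d)); by rewrite /SSq /= Scd eq e2 eqxx.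
case/andP: (E_in E12) => a1D b1D.
have Ra1 : isR a1 by apply: isR_of.
have hh4 : p y0 < p b1 by [].
have Rb1 : isR b1 by apply: isR_of => //; apply: ltn_trans ly0 hh4.
have kF : k < #|Fs a1| by apply: Abad => //; apply: ltn_trans h2 hyx.
have kG : k < #|Gs b1| by apply: Bbad.
have hX : #|PS a1 b1| <= k := PS_le E12.
have incl1 : Fs a1 :|: Gs b1 \subset PS a1 b1 :|: Tset.
  apply/subsetP => f; rewrite in_setU => /orP [F|G].
  - have [a [b [fe Eab h]]] := PSP F; rewrite p_u in h.
    have Eba : E b a by rewrite E_sym.
    rewrite fe in_setU; case: (edge_cases Eab) => [->|[na nb]]; first by rewrite orbT.
    rewrite (memPS _ _ Eab).
    by rewrite (NiF hL h1 h2 hyx hh4 h na nb (FUe _ _ Eab) (FUe _ _ Eba)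
      (FVe _ _ Eab) (FVe _ _ Eba) (FCe _ _ Eab) (FCe _ _ Eba)).
  - have [a [b [fe Eab h]]] := PSP G; rewrite p_v in h.
    have Eba : E b a by rewrite E_sym.
    rewrite fe in_setU; case: (edge_cases Eab) => [->|[na nb]]; first by rewrite orbT.
    rewrite (memPS _ _ Eab).
    by rewrite (NiG hL h1 h2 hyx hh4 h na nb (FUe _ _ Eab) (FUe _ _ Eba)
      (FVe _ _ Eab) (FVe _ _ Eba) (FCe _ _ Eab) (FCe _ _ Eba)).
have incl2 : Fs a1 :&: Gs b1 \subset PS a1 b1 :&: Tset.
  apply/subsetP => f; rewrite in_setI => /andP [F G].
  have [a [b [fe Eab h]]] := PSP F; rewrite p_u in h.
  have Eba : E b a by rewrite E_sym.
  rewrite fe in G; rewrite (Gs_mem b1 Eab) in G.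
  have /andP [hx hnt] := Nii hL h1 h2 hyx hh4 h G (FUe _ _ Eab) (FUe _ _ Eba)
      (FVe _ _ Eab) (FVe _ _ Eba) (FCe _ _ Eab) (FCe _ _ Eba).
  rewrite fe in_setI (memPS _ _ Eab) hx /=.
  case: (edge_cases Eab) => [//|[na nb]].
  by move: hnt; rewrite /NT -/(NTl (p a)) -/(NTl (p b)) na nb.
exact: (NBc (cardsUI _ _) (cardsUI _ _) (subset_leq_card incl1) (subset_leq_card incl2)
  hX card_Tset kF kG).
Qed.

Lemma main_exists : exists2 s, s \in R &
  (npierce E D (inl u) (inl s) <= k) && (npierce E D (inl v) (inl s) <= k).
Proof.
have hN := R_big.
set wl := nth (inl u) D' N.-1.
have wlD : wl \in D by apply: nth_D; lia.
have pwl : p wl = N.-1 by apply: p_nth; lia.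
have Rwl : isR wl by rewrite /isR wlD pwl; lia.
have Fwl : #|Fs wl| <= k.
  suff -> : Fs wl = set0 by rewrite cards0.
  apply/eqP; rewrite eqEsubset sub0set andbT; apply/subsetP => f /PSP [a [b [_ Eab h]]].
  case/andP: (E_in Eab) => aD bD; move: h; rewrite p_u pwl.
  by rewrite (negbTE (NB0 (p_lt aD) (p_lt bD))).
set wf := nth (inl u) D' l.+2.
have wfD : wf \in D by apply: nth_D; lia.
have pwf : p wf = l.+2 by apply: p_nth; lia.
have Rwf : isR wf by rewrite /isR wfD pwf; lia.
have Gwf : #|Gs wf| <= k.
  suff -> : Gs wf = set0 by rewrite cards0.
  apply/eqP; rewrite eqEsubset sub0set andbT; apply/subsetP => f /PSP [a [b [_ Eab h]]].
  by move: h; rewrite p_v pwf (negbTE (NB1 _ _ _)).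
pose A := [pred w | isR w && (#|Fs w| <= k)].
pose B := [pred w | isR w && (#|Gs w| <= k)].
have Awl : A wl by rewrite /A /= Rwl Fwl.
have Bwf : B wf by rewrite /B /= Rwf Gwf.
case: (arg_minnP (fun z => p z) Awl) => x0 Ax0 minx0.
case: (arg_maxnP (fun z => p z) Bwf) => y0 By0 maxy0.
case/andP: Ax0 => Rx0 Fx0; case/andP: By0 => Ry0 Gy0.
case: (leqP (p x0) (p y0)) => hxy.
-
  pose M := [pred w | isR w && (p x0 <= p w <= p y0)].
  have Mx0 : M x0 by rewrite /M /= Rx0 leqnn hxy.
  case: (arg_minnP (fun z => #|Fs z :|: Gs z|) Mx0) => w /andP [Rw /andP [h1 h2]] minw.
  have hF : #|Fs w| <= k.
    have e1 := card_UD (Fs w) (Gs w); have e2 := card_UD (Fs x0) (Gs x0).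
    have m := minw x0 Mx0.
    have s := subset_leq_card (Q1 Rx0 Rw h1).
    exact: (NA e1 e2 m s Fx0).
  have hG : #|Gs w| <= k.
    have My0 : M y0 by rewrite /M /= Ry0 hxy leqnn.
    have e1 := card_UD (Gs w) (Fs w); have e2 := card_UD (Gs y0) (Fs y0).
    rewrite setUC in e1; rewrite setUC in e2.
    have m := minw y0 My0.
    have s := subset_leq_card (Q2 Rw Ry0 h2).
    exact: (NA e1 e2 m s Gy0).
  case: (isR_inl Rw) => s sR ws; exists s => //.
  by rewrite -ws npierce_F ?npierce_G; [rewrite hF hG | case/andP: Rw..].
-
  exfalso; apply: (case2 Rx0 Ry0 hxy).
  + by move=> z Rz Fz; apply: minx0; rewrite /A /= Rz Fz.
  + by move=> z Rz Gz; apply: maxy0; rewrite /B /= Rz Gz.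
Qed.

End Main.

Theorem lemma5p2 (V : finType) (e : rel V) (k : nat) (u v : V) (R : {set V})
  (cs : seq (V * V)) (chi : V * V -> 'I_k.+1)
  (D : seq (V + 'I_(size cs))) :
  symmetric e -> irreflexive e ->
  u != v -> R != set0 -> u \notin R -> v \notin R ->
  (* cs lists C = edges between R and L := V \ ({u,v} u R), each exactly once *)
  uniq cs ->
  (forall r l, ((r, l) \in cs) = [&& r \in R, l \in ~: URset u v R & e r l]) ->
  size cs <= k ->
  circular_drawing D (Gtau_vertices u v R cs) ->
  outer_kplanar (Gtau_edge e u v R cs) D k ->
  (exists r, prefix (inl u :: rcons (tseq cs) (inl v)) (rot r D)) ->
  (forall i : 'I_(size cs),
     nat_of_ord (chi (nth (u, u) cs i)) =
     ncross (Gtau_edge e u v R cs) D (inl (nth (u, u) cs i).1) (inr i)) ->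
  exists w, w \in R /\
    npierce (Gtau_edge e u v R cs) D (inl u) (inl w) <= k /\
    npierce (Gtau_edge e u v R cs) D (inl v) (inl w) <= k.
Proof.
move=> esym eirr huv R0 HuR HvR ucs Hcs Hk Hdraw Hpl [r Hpre] Hchi.
have [s sR /andP [h1 h2]] := main_exists esym huv HuR HvR R0 Hcs Hk Hdraw Hpl Hpre.
by exists s.
Qed.
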